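(* Let $m\geq 13$ and $n\geq 13$ be integers with $m\equiv 2 \pmod 3$ and $n\equiv 2\pmod 3$. Then $\gamma_{sR}(C_m\vee C_n)=2$.
   Context: $C_n$ denotes the cycle on $n$ vertices. For a graph $G=(V,E)$ and $x\in V$, $N_G[x]=\{x\}\cup\{y: xy\in E\}$. A signed Roman dominating function (SRDF) on $G$ is a function $f:V\to\{-1,1,2\}$ such that (a) $\sum_{y\in N_G[x]}f(y)\geq 1$ for every $x\in V$, and (b) every vertex $x$ with $f(x)=-1$ is adjacent to at least one vertex $y$ with $f(y)=2$. The weight of $f$ is $\sum_{x\in V}f(x)$, and $\gamma_{sR}(G)$ is the minimum weight of an SRDF on $G$. The join $G_1\vee G_2$ of two graphs has vertex set $V(G_1)\cup V(G_2)$ (disjoint union) and edge set $E(G_1)\cup E(G_2)\cup\{uv: u\in V(G_1), v\in V(G_2)\}$. *)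

(* Defs.v *)
From mathcomp Require Import all_boot all_order all_algebra.
Set Implicit Arguments. Unset Strict Implicit. Unset Printing Implicit Defensive.
Import Order.TTheory GRing.Theory Num.Theory.
Local Open Scope ring_scope.

Definition cycle_adj (n : nat) : rel 'I_n :=
  fun i j => (i != j) && ((j == (i.+1 %% n)%N :> nat) || (i == (j.+1 %% n)%N :> nat)).

Definition join_adj (T1 T2 : finType) (e1 : rel T1) (e2 : rel T2) : rel (T1 + T2)%type :=
  fun u v => match u, v with
             | inl a, inl b => e1 a b
             | inr a, inr b => e2 a b
             | _, _ => true
             end.

Definition closed_nbhd (T : finType) (e : rel T) (x : T) : {set T} :=
  [set y | (y == x) || e x y].

Definition weight (T : finType) (f : T -> int) : int := \sum_(x : T) f x.

Definition is_SRDF (T : finType) (e : rel T) (f : T -> int) : Prop :=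
  (forall x, f x \in [:: -1; 1; 2]) /\
  (forall x, 1 <= \sum_(y in closed_nbhd e x) f y) /\
  (forall x, f x = -1 -> exists2 y, e x y & f y = 2).

Definition gamma_sR_is (T : finType) (e : rel T) (k : int) : Prop :=
  (exists f, is_SRDF e f /\ weight f = k) /\
  (forall f, is_SRDF e f -> k <= weight f).

(* Main.v *)
Require Import Defs.
From mathcomp Require Import all_boot all_order all_algebra zify.
Import Order.TTheory GRing.Theory Num.Theory.

Lemma succE m x : (x < m -> x.+1 %% m = if x.+1 == m then 0 else x.+1)%N.
Proof. move=> h; case: eqP => [->|ne]; first by rewrite modnn. by rewrite modn_small; lia. Qed.
Lemma predE m x : (x < m -> (x + m).-1 %% m = if x == 0 then m.-1 else x.-1)%N.
Proof. move=> h; case: eqP => [->|ne].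
 rewrite add0n modn_small //; lia.
 have -> : ((x+m).-1 = x.-1 + m)%N by lia.
 by rewrite modnDr modn_small; lia. Qed.

Lemma adjE m (x y : 'I_m) : (3 <= m)%N ->
  cycle_adj x y = (y == ordS x) || (y == ord_pred x).
Proof.
move=> hm; rewrite /cycle_adj -!(inj_eq val_inj) /=.
have := ltn_ord x; have := ltn_ord y.
move: (nat_of_ord x) (nat_of_ord y) => a b ha hb.
rewrite !succE // predE //.
case: (eqVneq a.+1 m) => ? /=; case: (eqVneq b.+1 m) => ? /=; case: (eqVneq a 0) => ? /=;
repeat case: eqP => ?; lia.
Qed.

Lemma distinct3 m (x : 'I_m) : (3 <= m)%N ->
  [/\ x != ordS x, x != ord_pred x & ordS x != ord_pred x].
Proof.
move=> hm; rewrite -!(inj_eq val_inj) /=.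
have := ltn_ord x; move: (nat_of_ord x) => a ha.
rewrite !succE // predE //.
case: (eqVneq a.+1 m) => ? /=; case: (eqVneq a 0) => ? /=;
split; repeat case: eqP => ?; lia.
Qed.

Local Open Scope ring_scope.

Lemma cyc_sum m (g : 'I_m -> int) x : (3 <= m)%N ->
  \sum_(i | (i == x) || cycle_adj x i) g i = g x + g (ordS x) + g (ord_pred x).
Proof.
move=> hm; have [d1 d2 d3] := @distinct3 m x hm.
rewrite (eq_bigl (mem (x |: (ordS x |: [set ord_pred x])))); last first.
  by move=> i; rewrite !inE adjE // orbA.
rewrite big_setU1 /=; last by rewrite !inE negb_or d1 d2.
rewrite big_setU1 /=; last by rewrite !inE d3.
by rewrite big_set1 addrA.
Qed.

Lemma rot_sum m (g : 'I_m -> int) :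
  \sum_x (g x + g (ordS x) + g (ord_pred x)) = 3%:R * \sum_x g x.
Proof.
rewrite !big_split /=.
have e1 : \sum_i g (ordS i) = \sum_i g i by rewrite [RHS](reindex_inj (@ordS_inj m)).
have e2 : \sum_i g (ord_pred i) = \sum_i g i by rewrite [RHS](reindex_inj (can_inj (@ord_predK m))).
rewrite e1 e2.
by rewrite mulr_natl !mulrSr mulr0n add0r.
Qed.

Lemma nbhdL m n (f : 'I_m + 'I_n -> int) x : (3 <= m)%N ->
  \sum_(y in closed_nbhd (join_adj (@cycle_adj m) (@cycle_adj n)) (inl x)) f y =
  f (inl x) + f (inl (ordS x)) + f (inl (ord_pred x)) + \sum_j f (inr j).
Proof.
move=> hm; rewrite big_sumType /=.
rewrite (eq_bigl (fun i => (i == x) || cycle_adj x i)); last by move=> i; rewrite /closed_nbhd inE.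
rewrite cyc_sum //; congr (_ + _).
by apply: eq_bigl => i; rewrite /closed_nbhd inE orbT.
Qed.

Lemma nbhdR m n (f : 'I_m + 'I_n -> int) x : (3 <= n)%N ->
  \sum_(y in closed_nbhd (join_adj (@cycle_adj m) (@cycle_adj n)) (inr x)) f y =
  f (inr x) + f (inr (ordS x)) + f (inr (ord_pred x)) + \sum_j f (inl j).
Proof.
move=> hm; rewrite big_sumType /=.
rewrite (eq_bigl (fun i => (i == x) || cycle_adj x i)); last by move=> i; rewrite /closed_nbhd inE.
rewrite cyc_sum // addrC; congr (_ + _).
by apply: eq_bigl => i; rewrite /closed_nbhd inE orbT.
Qed.

Lemma lower m n (f : 'I_m + 'I_n -> int) : (13 <= m)%N -> (13 <= n)%N ->
  is_SRDF (join_adj (@cycle_adj m) (@cycle_adj n)) f -> 2 <= weight f.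
Proof.
move=> hm hn [_ [hd _]].
have hA : (m%:R : int) <= 3%:R * \sum_i f (inl i) + m%:R * \sum_j f (inr j).
  have: \sum_(x : 'I_m) (1:int) <= \sum_x (f (inl x) + f (inl (ordS x)) + f (inl (ord_pred x)) + \sum_j f (inr j)).
    by apply: ler_sum => x _; rewrite -nbhdL; [exact: hd | lia].
  rewrite big_split /= rot_sum !sumr_const card_ord !mulr_natl; move=> h; exact: h.
have hB : (n%:R : int) <= 3%:R * \sum_i f (inr i) + n%:R * \sum_j f (inl j).
  have: \sum_(x : 'I_n) (1:int) <= \sum_x (f (inr x) + f (inr (ordS x)) + f (inr (ord_pred x)) + \sum_j f (inl j)).
    by apply: ler_sum => x _; rewrite -nbhdR; [exact: hd | lia].
  rewrite big_split /= rot_sum !sumr_const card_ord !mulr_natl; move=> h; exact: h.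
rewrite /weight big_sumType /=.
move: hA hB; move: (\sum_i f (inl i)) (\sum_i f (inr i)) => A B hA hB.
have [hb|hb] := lerP B 0.
  nia.
have [ha|ha] := lerP A 0.
  nia.
lia.
Qed.
Definition h (i : nat) : int := if (i %% 3 == 0)%N then 2 else -1.
Lemma sum_h k : \sum_(0 <= i < 3 * k + 2) h i = 1.
Proof.
elim: k => [|k IH]; first by rewrite big_nat_recr //= big_nat_recr //= big_geq.
have -> : (3 * k.+1 + 2 = (3 * k + 2).+1.+1.+1)%N by lia.
rewrite big_nat_recr /=; last by lia.
rewrite big_nat_recr /=; last by lia.
rewrite big_nat_recr /=; last by lia.
rewrite IH /h.
have -> : ((3 * k + 2) %% 3 = 2)%N by lia.
have -> : ((3 * k + 2).+1 %% 3 = 0)%N by lia.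
have -> : ((3 * k + 2).+2 %% 3 = 1)%N by lia.
by [].
Qed.
Lemma sum_h' m : (m %% 3 = 2)%N -> \sum_(i < m) h i = 1.
Proof.
move=> hm; rewrite -(big_mkord xpredT h).
have -> : m = (3 * (m %/ 3) + 2)%N by lia.
exact: sum_h.
Qed.
Lemma key m x : (m %% 3 = 2)%N -> (3 <= m)%N -> (x < m)%N ->
  0 <= h x + h (x.+1 %% m) + h ((x + m).-1 %% m).
Proof.
move=> hm h3 hx.
have e1 : (x.+1 %% m = if x.+1 == m then 0 else x.+1)%N.
  case: eqP => [->|ne]; first by rewrite modnn. by rewrite modn_small; lia.
have e2 : ((x + m).-1 %% m = if x == 0 then m.-1 else x.-1)%N.
  case: eqP => [->|ne]. rewrite add0n modn_small //; lia.
  have -> : ((x+m).-1 = x.-1 + m)%N by lia.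
  by rewrite modnDr modn_small; lia.
rewrite e1 e2 /h.
case: (eqVneq x.+1 m) => ? /=; case: (eqVneq x 0) => ? /=;
repeat (case: eqP => ?); lia.
Qed.

Definition F m n (v : 'I_m + 'I_n) : int :=
  match v with inl i => h i | inr j => h j end.

Theorem mainTheorem8 (m n : nat) :
  (13 <= m)%N -> (13 <= n)%N -> (m %% 3 = 2)%N -> (n %% 3 = 2)%N ->
  gamma_sR_is (join_adj (@cycle_adj m) (@cycle_adj n)) 2.
Proof.
move=> hm hn hm3 hn3; split; last by move=> f hf; exact: lower.
have hm0 : (0 < m)%N by lia.
have hn0 : (0 < n)%N by lia.
exists (@F m n); split; last first.
  by rewrite /weight big_sumType /= (@sum_h' m hm3) (@sum_h' n hn3).
split.
  by case=> i /=; rewrite /h; case: ifP.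
split.
  case=> x.
    rewrite nbhdL /=; last by lia.
    rewrite (@sum_h' n hn3) lerDr.
    by apply: key => //; lia.
  rewrite nbhdR /=; last by lia.
  rewrite (@sum_h' m hm3) lerDr.
  by apply: key => //; lia.
case=> x _.
  by exists (inr (Ordinal hn0)).
by exists (inl (Ordinal hm0)).
Qed.
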